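(* Let $(\Xi,\Xi^\infty)$ and $(\Lambda,\Lambda^\infty)$ be countable approximate groups, and let $f:\Xi^\infty\to\Lambda^\infty$ be a function with $f(\Xi)\subseteq\Lambda$ which is a quasimorphism (its defect set $D(f)=\{f(y)^{-1}f(x)^{-1}f(xy)\mid x,y\in\Xi^\infty\}$ is finite) and is symmetric ($f(x^{-1})=f(x)^{-1}$ for all $x\in\Xi^\infty$). Let $d$ and $d'$ be left-invariant proper metrics on $\Xi^\infty$ and $\Lambda^\infty$ respectively. Then the restriction $f|_\Xi:(\Xi,d|_{\Xi\times\Xi})\to(\Lambda,d'|_{\Lambda\times\Lambda})$ is coarsely Lipschitz, i.e. for every $t>0$ there is $s>0$ such that $d(\xi,\eta)\leq t$ with $\xi,\eta\in\Xi$ implies $d'(f(\xi),f(\eta))\leq s$.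
   Context: A subset $\Lambda$ of a group $G$ is an approximate subgroup if $\Lambda=\Lambda^{-1}$, $e\in\Lambda$, and there is a finite $F\subset G$ with $\Lambda^2\subseteq\Lambda F$. Its enveloping group is $\Lambda^\infty=\bigcup_{k\in\mathbb N}\Lambda^k$; $(\Lambda,\Lambda^\infty)$ is called an approximate group, countable if $\Lambda$ is countable. Countable groups are regarded as discrete; a metric is proper if closed balls are compact. *)

(* Defs.v *)
From Stdlib Require Import Reals List.
Open Scope R_scope.

Record Group := {
  carrier :> Type;
  gmul : carrier -> carrier -> carrier;
  ginv : carrier -> carrier;
  gone : carrier;
  gmulA : forall x y z, gmul x (gmul y z) = gmul (gmul x y) z;
  gmul1l : forall x, gmul gone x = x;
  gmul1r : forall x, gmul x gone = x;
  gmulVl : forall x, gmul (ginv x) x = gone;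
  gmulVr : forall x, gmul x (ginv x) = gone
}.

Arguments gmul {g}.
Arguments ginv {g}.
Arguments gone {g}.

Definition finite_set {G : Group} (S : G -> Prop) : Prop :=
  exists l : list G, forall x, S x -> In x l.

Definition countable_set {G : Group} (S : G -> Prop) : Prop :=
  exists c : G -> nat, forall x y, S x -> S y -> c x = c y -> x = y.

Definition approx_subgroup {G : Group} (L : G -> Prop) : Prop :=
  (forall x, L x <-> L (ginv x)) /\ L gone /\
  exists F : list G, forall a b, L a -> L b ->
    exists l f, L l /\ In f F /\ gmul a b = gmul l f.

Fixpoint pow_set {G : Group} (L : G -> Prop) (k : nat) : G -> Prop :=
  match k with
  | O => fun x => x = gone
  | S k' => fun x => exists a b, L a /\ pow_set L k' b /\ x = gmul a b
  end.

Definition envelope {G : Group} (L : G -> Prop) : G -> Prop :=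
  fun x => exists k, pow_set L k x.

Definition countable_approx_group {G : Group} (L : G -> Prop) : Prop :=
  approx_subgroup L /\ countable_set L.

Definition defect_set {G H : Group} (X : G -> Prop) (f : G -> H) : H -> Prop :=
  fun z => exists x y, envelope X x /\ envelope X y /\
    z = gmul (ginv (f y)) (gmul (ginv (f x)) (f (gmul x y))).

Definition quasimorphism {G H : Group} (X : G -> Prop) (f : G -> H) : Prop :=
  finite_set (defect_set X f).

Definition symmetric_map {G H : Group} (X : G -> Prop) (f : G -> H) : Prop :=
  forall x, envelope X x -> f (ginv x) = ginv (f x).

Definition is_metric_on {G : Group} (S : G -> Prop) (d : G -> G -> R) : Prop :=
  forall x y z, S x -> S y -> S z ->
    0 <= d x y /\ (d x y = 0 <-> x = y) /\ d x y = d y x /\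
    d x z <= d x y + d y z.

Definition left_invariant_on {G : Group} (S : G -> Prop) (d : G -> G -> R) : Prop :=
  forall g x y, S g -> S x -> S y -> d (gmul g x) (gmul g y) = d x y.

(* Proper: closed balls compact; S countable, hence discrete, so compact = finite. *)
Definition proper_on {G : Group} (S : G -> Prop) (d : G -> G -> R) : Prop :=
  forall x r, S x -> finite_set (fun y => S y /\ d x y <= r).

(* Main.v *)
Require Import Defs.
From Stdlib Require Import Reals Lra List.
Open Scope R_scope.

Lemma ginv_mul (G : Group) (a b : G) : ginv (gmul a b) = gmul (ginv b) (ginv a).
Proof.
  assert (E : gmul (gmul a b) (gmul (ginv b) (ginv a)) = gone).
  { rewrite <- gmulA, (gmulA _ b), gmulVr, gmul1l, gmulVr. reflexivity. }
  transitivity (gmul (ginv (gmul a b)) (gmul (gmul a b) (gmul (ginv b) (ginv a)))).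
  - rewrite E, gmul1r. reflexivity.
  - rewrite gmulA, gmulVl, gmul1l. reflexivity.
Qed.

Lemma pow_mul (G : Group) (L : G -> Prop) k m x y :
  pow_set L k x -> pow_set L m y -> pow_set L (k + m) (gmul x y).
Proof.
  revert x. induction k as [|k IH]; simpl; intros x Hx Hy.
  - subst. rewrite gmul1l. exact Hy.
  - destruct Hx as [a [b [Ha [Hb ->]]]].
    exists a, (gmul b y). split; [exact Ha|split; [apply IH; assumption|]].
    rewrite gmulA. reflexivity.
Qed.

Lemma env_mul (G : Group) (L : G -> Prop) x y :
  envelope L x -> envelope L y -> envelope L (gmul x y).
Proof. intros [k Hk] [m Hm]. exists (k + m)%nat. apply pow_mul; assumption. Qed.

Lemma env_in (G : Group) (L : G -> Prop) x : L x -> envelope L x.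
Proof. intros H. exists 1%nat. simpl. exists x, gone. rewrite gmul1r. auto. Qed.

Lemma env_one (G : Group) (L : G -> Prop) : envelope L gone.
Proof. exists 0%nat. reflexivity. Qed.

Lemma env_inv (G : Group) (L : G -> Prop) x :
  (forall x, L x <-> L (ginv x)) -> envelope L x -> envelope L (ginv x).
Proof.
  intros Hs [k Hk]. revert x Hk. induction k as [|k IH]; simpl; intros x Hx.
  - subst. exists 0%nat. simpl. rewrite <- (gmulVl _ gone) at 2. rewrite gmul1r. reflexivity.
  - destruct Hx as [a [b [Ha [Hb ->]]]]. rewrite ginv_mul.
    apply env_mul. apply IH; assumption. apply env_in. apply (proj1 (Hs a)). exact Ha.
Qed.

Definition bound {A : Type} (l : list A) (h : A -> R) : R :=
  fold_right (fun a acc => Rabs (h a) + acc) 0 l.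

Lemma bound_ge0 {A : Type} (l : list A) h : 0 <= bound l h.
Proof. induction l; simpl. lra. pose proof (Rabs_pos (h a)). lra. Qed.

Lemma bound_in {A : Type} (l : list A) h a : In a l -> h a <= bound l h.
Proof.
  induction l as [|b l IH]; simpl; [tauto|]. intros [->|Hi].
  - pose proof (Rle_abs (h a)). pose proof (bound_ge0 l h). lra.
  - pose proof (Rabs_pos (h b)). specialize (IH Hi). lra.
Qed.

Theorem lemma5p1 (G H : Group) (Xi : G -> Prop) (Lam : H -> Prop) (f : G -> H)
  (d : G -> G -> R) (d' : H -> H -> R) :
  countable_approx_group Xi ->
  countable_approx_group Lam ->
  (forall x, envelope Xi x -> envelope Lam (f x)) ->
  (forall x, Xi x -> Lam (f x)) ->
  quasimorphism Xi f ->
  symmetric_map Xi f ->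
  is_metric_on (envelope Xi) d -> left_invariant_on (envelope Xi) d ->
  proper_on (envelope Xi) d ->
  is_metric_on (envelope Lam) d' -> left_invariant_on (envelope Lam) d' ->
  proper_on (envelope Lam) d' ->
  forall t, 0 < t -> exists s, 0 < s /\
    forall xi eta, Xi xi -> Xi eta -> d xi eta <= t -> d' (f xi) (f eta) <= s.
Proof.
  intros [[HsX _] _] [[HsL _] _] Hfe _ [L2 HL2] _ _ HliX HpX _ HliL _ t Ht.
  destruct (HpX gone t (env_one _ _)) as [L1 HL1].
  set (h := fun y => bound L2 (fun z => d' gone (gmul (f y) z))).
  exists (1 + bound L1 h). split.
  { pose proof (bound_ge0 L1 h). lra. }
  intros xi eta Hxi Heta Hd.
  assert (Exi : envelope Xi xi) by (apply env_in; auto).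
  assert (Eeta : envelope Xi eta) by (apply env_in; auto).
  assert (Eixi : envelope Xi (ginv xi)) by (apply env_inv; auto).
  set (y := gmul (ginv xi) eta).
  assert (Ey : envelope Xi y) by (apply env_mul; auto).
  assert (Hy : In y L1).
  { apply HL1. split; [exact Ey|].
    unfold y. rewrite <- (gmulVl _ xi). rewrite HliX; auto. }
  assert (Exy : gmul xi y = eta).
  { unfold y. rewrite gmulA, gmulVr, gmul1l. reflexivity. }
  set (z := gmul (ginv (f y)) (gmul (ginv (f xi)) (f (gmul xi y)))).
  assert (Hz : In z L2).
  { apply HL2. exists xi, y. auto. }
  assert (Ef : f eta = gmul (f xi) (gmul (f y) z)).
  { unfold z. rewrite Exy.
    rewrite (gmulA _ (f y)), gmulVr, gmul1l, gmulA, gmulVr, gmul1l. reflexivity. }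
  assert (Ez : envelope Lam z).
  { unfold z. apply env_mul. apply env_inv; auto.
    apply env_mul. apply env_inv; auto. apply Hfe. rewrite Exy; auto. }
  rewrite Ef, <- (gmul1r _ (f xi)) at 1.
  rewrite HliL; auto.
  2: apply env_one.
  2: apply env_mul; auto.
  pose proof (bound_in L2 (fun z => d' gone (gmul (f y) z)) z Hz). simpl in H0.
  pose proof (bound_in L1 h y Hy). unfold h at 1 in H1. lra.
Qed.
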